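(* Let $P$ be an optimal EBA decision protocol with respect to $\gamma_{\mathit{fip},n,t}$ and $\mathcal I=\mathcal I_{\gamma_{\mathit{fip},n,t},P}$. If for some agent $i$ and point $(r,m)$ we have $\mathcal I,(r,m)\models \mathit{decided}_i=\bot\wedge K_i\big(C_{\mathcal N}(\mathit{t\text{-}faulty}\wedge\mathit{no\text{-}decided}_{\mathcal N}(1)\wedge\exists 0)\big)$, then every agent $j\in\mathcal N(r)$ that has not decided by time $m$ decides in round $m+1$ of $r$. The same conclusion holds if instead $\mathcal I,(r,m)\models \mathit{decided}_i=\bot\wedge K_i\big(C_{\mathcal N}(\mathit{t\text{-}faulty}\wedge\mathit{no\text{-}decided}_{\mathcal N}(0)\wedge\exists 1)\big)$.
   Context: Agents and runs. There are $n$ agents $\mathit{Agt}=\{1,\ldots,n\}$; time is $m\in\mathbb N$, and round $m+1$ is the step from time $m$ to time $m+1$. A failure pattern is a pair $(\mathcal N,F)$ with $\mathcal N\subseteq\mathit{Agt}$ (the nonfaulty agents) and $F:\mathbb N\times\mathit{Agt}\times\mathit{Agt}\to\{0,1\}$, where $F(m,i,j)=0$ means the message from $i$ to $j$ in round $m+1$ is lost. The sending-omissions failure model $SO(t)$ ($t<n$) is the set of failure patterns with $|\mathit{Agt}\setminus\mathcal N|\le t$ such that $F(m,i,j)=0$ implies $i\notin\mathcal N$. An action protocol $P$ gives each agent $i$ a map $P_i$ from its local states to actions $\{\mathtt{decide}_i(0),\mathtt{decide}_i(1),\mathtt{noop}\}$; a run $r$ is determined by the initial states and failure pattern: at each time $k$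 each agent performs $P_i(r_i(k))$, sends its messages, lost messages are replaced by $\bot$, and local states are updated; $\mathcal N(r)$ is the nonfaulty set of $r$. Agent $i$ decides $v$ in round $k$ of $r$ if $P_i(r_i(k-1))=\mathtt{decide}_i(v)$. $\mathcal I,(r,m)\models K_i\varphi$ iff $\varphi$ holds at all points $(r',m')$ of $\mathcal I$ with $r'_i(m')=r_i(m)$; $\bigcirc\varphi$ holds at $(r,m)$ iff $\varphi$ holds at $(r,m+1)$; $\ominus\varphi$ holds at $(r,m)$ iff $m>0$ and $\varphi$ holds at $(r,m-1)$. Full-information context. $\gamma_{\mathit{fip},n,t}$ has $n$ agents and failure model $SO(t)$. Each agent's local state consists of its time $\mathit{time}_i$, its initial preference $\mathit{init}_i\in\{0,1\}$ (arbitrary), and the complete record of all messages it has received (with senders and rounds); it does not contain decision variables. In every round every agent sends its entire current local state to every agent, regardless of its action. Given an action protocol $P$, $\mathcal I_{\gamma_{\mathit{fip},n,t},P}$ is the interpreted system of all its runs, where $\mathit{decided}_i=v$ holds at $(r,m)$ iff $i$ decided $v$ in some round $\le m$ of $r$ ($\mathit{decided}_i=\bot$ if $i$ has not decided), $\mathit{init}_i=v$ is read from the local state, and $i\in\mathcal N$ holds iff $i\in\mathcal N(r)$. $\exists v$ abbreviates $\bigvee_j\mathit{init}_j=v$. $P$ is an EBA decision protocol for $\gamma_{\mathit{fip},n,t}$ if in every run: (Unique Decision) no agent decides $v$ and later $1-v$; (Agreement) no two nonfaulty agents decide different values; (Validity) if a nonfaulty agent decides $v$ then $\mathit{init}_j=v$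 for some $j$; (Termination) every nonfaulty agent eventually decides. Runs of $P$ and $P'$ correspond if they have the same initial global state. $P$ dominates $P'$ ($P'\le P$) if for all corresponding runs $r$ of $P$, $r'$ of $P'$, every $i\in\mathcal N(r)$ and time $m$: if $P_i(r_i(m))=\mathtt{decide}_i(v)$ then $P'_i(r'_i(m'))$ is not a decide action for any $m'<m$; $P$ strictly dominates $P'$ if $P'\le P$ and not $P\le P'$; an EBA decision protocol is optimal if no EBA decision protocol strictly dominates it. Common knowledge. $E_{\mathcal N}\varphi$ holds at $(r,m)$ iff $K_j\varphi$ holds at $(r,m)$ for every $j\in\mathcal N(r)$; $C_{\mathcal N}\varphi$ holds iff $E_{\mathcal N}^k\varphi$ holds for every $k\ge1$. $C_{\mathcal N}(\mathit{t\text{-}faulty}\wedge\varphi)$ abbreviates $\bigvee_{A\subseteq\mathit{Agt},\,|A|=t}C_{\mathcal N}\big(\bigwedge_{i\in A}\neg(i\in\mathcal N)\wedge\varphi\big)$, and $C_{\mathcal N}(\mathit{t\text{-}faulty})$ is the case $\varphi=\mathit{true}$. $\mathit{no\text{-}decided}_{\mathcal N}(x)$ abbreviates $\bigwedge_{j\in\mathcal N}\neg(\mathit{decided}_j=x)$. *)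

(* Defs.v *)
From mathcomp Require Import all_boot.
Set Implicit Arguments.
Unset Strict Implicit.
Unset Printing Implicit Defensive.

(* Agents are 'I_n.  Binary values: 0 is [false], 1 is [true]. *)

(* Full-information local states: the initial preference at time 0; at time
   m+1 the previous local state together with, for each sender j, the message
   received from j in round m+1 ([Some s] = j's local state at time m,
   [None] = bot, lost message).  The time is the depth of the state. *)
Inductive lstate (n : nat) : Type :=
| LInit : bool -> lstate n
| LStep : lstate n -> ('I_n -> option (lstate n)) -> lstate n.

(* Failure pattern (N, F); F m i j = false : message i -> j in round m+1 lost. *)
Record fpattern (n : nat) := FP {
  fp_N : {set 'I_n};
  fp_F : nat -> 'I_n -> 'I_n -> bool }.

Definition SO (n t : nat) (f : fpattern n) : Prop :=
  #|~: fp_N f| <= t /\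
  forall m (i j : 'I_n), fp_F f m i j = false -> i \notin fp_N f.

(* A run is determined by the initial preferences and the failure pattern. *)
Record run (n : nat) := Run {
  r_init : 'I_n -> bool;
  r_fp : fpattern n }.

Definition Nf n (r : run n) : {set 'I_n} := fp_N (r_fp r).

(* r_i(m): local state of agent i at time m in run r (independent of the
   action protocol in gamma_fip). *)
Fixpoint lst n (r : run n) (i : 'I_n) (m : nat) : lstate n :=
  match m with
  | 0 => LInit n (r_init r i)
  | m'.+1 => LStep (lst r i m')
               (fun j => if fp_F (r_fp r) m' j i then Some (lst r j m') else None)
  end.

Definition isrun n (t : nat) (r : run n) : Prop := SO t (r_fp r).

(* Action protocol: [P i s = Some v] is decide_i(v), [None] is noop. *)
Definition protocol (n : nat) := 'I_n -> lstate n -> option bool.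

Definition decides_in n (P : protocol n) (r : run n) (i : 'I_n) (v : bool) (k : nat) :=
  0 < k /\ P i (lst r i k.-1) = Some v.

Definition decided_by n (P : protocol n) (r : run n) (i : 'I_n) (v : bool) (m : nat) :=
  exists k, k <= m /\ decides_in P r i v k.

Definition undecided n (P : protocol n) (r : run n) (i : 'I_n) (m : nat) :=
  forall v, ~ decided_by P r i v m.

Definition formula (n : nat) := run n -> nat -> Prop.

Definition Knows n (t : nat) (i : 'I_n) (phi : formula n) : formula n :=
  fun r m => forall r' m', isrun t r' -> lst r' i m' = lst r i m -> phi r' m'.

Definition EN n (t : nat) (phi : formula n) : formula n :=
  fun r m => forall j, j \in Nf r -> Knows t j phi r m.

Fixpoint Eiter n (t : nat) (k : nat) (phi : formula n) : formula n :=
  match k with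
  | 0 => phi
  | k'.+1 => EN t (Eiter t k' phi)
  end.

Definition CN n (t : nat) (phi : formula n) : formula n :=
  fun r m => forall k, 0 < k -> Eiter t k phi r m.

Definition CN_tfaulty n (t : nat) (phi : formula n) : formula n :=
  fun r m => exists A : {set 'I_n}, #|A| = t /\
    CN t (fun r' m' => (forall i, i \in A -> i \notin Nf r') /\ phi r' m') r m.

Definition no_decided n (P : protocol n) (x : bool) : formula n :=
  fun r m => forall j, j \in Nf r -> ~ decided_by P r j x m.

Definition exists_init n (v : bool) : formula n :=
  fun r _ => exists j, r_init r j = v.

Definition EBA n (t : nat) (P : protocol n) : Prop :=
  forall r : run n, isrun t r ->
  [/\
      (forall i v k k', k < k' -> decides_in P r i v k -> ~ decides_in P r i (~~ v) k'),
      (forall i j v w k k', i \in Nf r -> j \in Nf r ->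
         decides_in P r i v k -> decides_in P r j w k' -> v = w),
      (forall i v k, i \in Nf r -> decides_in P r i v k -> exists j, r_init r j = v) &
      (forall i, i \in Nf r -> exists v k, decides_in P r i v k)].

(* [dominates t P P'] : P dominates P' (P' <= P).  Corresponding runs have the
   same initial global state (initial preferences and failure pattern), hence
   the same local states. *)
Definition dominates n (t : nat) (P P' : protocol n) : Prop :=
  forall r : run n, isrun t r -> forall i, i \in Nf r ->
  forall m v, P i (lst r i m) = Some v ->
  forall m', m' < m -> P' i (lst r i m') = None.

Definition strictly_dominates n (t : nat) (P P' : protocol n) : Prop :=
  dominates t P P' /\ ~ dominates t P' P.

Definition optimal n (t : nat) (P : protocol n) : Prop :=
  EBA t P /\ forall P', EBA t P' -> ~ strictly_dominates t P' P.

(* Main.v *)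
From Stdlib Require Import ClassicalEpsilon Classical.
Require Import Defs.
From mathcomp Require Import all_boot.

Set Implicit Arguments.
Unset Strict Implicit.
Unset Printing Implicit Defensive.

Definition dec (p : Prop) : bool :=
  if excluded_middle_informative p then true else false.

Lemma decP (p : Prop) : reflect p (dec p).
Proof. rewrite /dec; case: excluded_middle_informative => h; by constructor. Qed.

Lemma dec_iff (p q : Prop) : (p <-> q) -> dec p = dec q.
Proof. move=> h; case: decP => hp; case: decP => hq //; tauto. Qed.

Definition KS n t (j : 'I_n) (phi : formula n) (s : lstate n) : Prop :=
  forall r' m', isrun t r' -> lst r' j m' = s -> phi r' m'.

Definition C0 n t (P : protocol n) : formula n :=
  CN_tfaulty t (fun r' m' => no_decided P true r' m' /\ exists_init false r' m').
Definition C1 n t (P : protocol n) : formula n :=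
  CN_tfaulty t (fun r' m' => no_decided P false r' m' /\ exists_init true r' m').

Definition here n t (P : protocol n) (j : 'I_n) (s : lstate n) : option bool :=
  if dec (KS t j (C0 t P) s) then Some false
  else if dec (KS t j (C1 t P) s) then Some true else None.

Fixpoint firstK n t (P : protocol n) (j : 'I_n) (s : lstate n) : option bool :=
  match s with
  | LInit _ => here t P j s
  | LStep s' _ => match firstK t P j s' with
                  | Some b => Some b
                  | None => here t P j s end
  end.

Definition Q n t (P : protocol n) (j : 'I_n) (s : lstate n) : option bool :=
  match firstK t P j s with Some b => Some b | None => P j s end.

Fixpoint prevQ n t (P : protocol n) (j : 'I_n) (s : lstate n) : bool :=
  match s with
  | LInit _ => false
  | LStep s' _ => isSome (Q t P j s') || prevQ t P j s'
  end.

Definition P' n t (P : protocol n) : protocol n :=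
  fun j s => if prevQ t P j s then None else Q t P j s.

Definition hereR n t (P : protocol n) (r : run n) (m : nat) : option bool :=
  if dec (C0 t P r m) then Some false
  else if dec (C1 t P r m) then Some true else None.

Fixpoint firstR n t (P : protocol n) (r : run n) (m : nat) : option bool :=
  match m with
  | 0 => hereR t P r 0
  | m'.+1 => match firstR t P r m' with
             | Some b => Some b
             | None => hereR t P r m'.+1 end
  end.

Lemma Eiter_E n t k (phi : formula n) r m :
  Eiter t k.+1 phi r m = EN t (Eiter t k phi) r m.
Proof. by []. Qed.

Lemma KS_CN n t (phi : formula n) (j : 'I_n) r m :
  isrun t r -> j \in Nf r ->
  (KS t j (CN_tfaulty t phi) (lst r j m) <-> CN_tfaulty t phi r m).
Proof.
move=> Hr Hj; split.
  by move=> h; apply: h.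
move=> [A [HA HC]] r' m' Hr' Hl; exists A; split => // k Hk.
have := HC k.+1 isT; rewrite Eiter_E => /(_ j Hj r' m' Hr' Hl).
by [].
Qed.

Lemma CN_refl n t (phi : formula n) (j : 'I_n) r m :
  isrun t r -> j \in Nf r -> CN_tfaulty t phi r m -> phi r m.
Proof.
move=> Hr Hj [A [HA HC]].
have := HC 1 isT => /(_ j Hj r m Hr erefl) [].
by [].
Qed.

Lemma here_eq n t (P : protocol n) j r m :
  isrun t r -> j \in Nf r -> here t P j (lst r j m) = hereR t P r m.
Proof.
move=> Hr Hj; rewrite /here /hereR.
rewrite (dec_iff (KS_CN _ _ Hr Hj)) (dec_iff (KS_CN _ _ Hr Hj)).
by [].
Qed.

Lemma firstK_eq n t (P : protocol n) j r m :
  isrun t r -> j \in Nf r -> firstK t P j (lst r j m) = firstR t P r m.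
Proof.
move=> Hr Hj; elim: m => [|m IH] /=.
  by rewrite -(here_eq P 0 Hr Hj).
by rewrite IH (here_eq P m.+1 Hr Hj).
Qed.

Lemma firstR_mono n t (P : protocol n) r m b m' :
  firstR t P r m = Some b -> m <= m' -> firstR t P r m' = Some b.
Proof.
move=> H; elim: m' => [|m' IH]; first by rewrite leqn0 => /eqP <-.
rewrite leq_eqVlt => /orP [/eqP <- //|]; rewrite ltnS => /IH /= -> //.
Qed.

Lemma firstR_src n t (P : protocol n) r m b :
  firstR t P r m = Some b -> exists m'', m'' <= m /\ hereR t P r m'' = Some b /\
    firstR t P r m'' = Some b.
Proof.
elim: m => [|m IH] /=; first by move=> h; exists 0.
case E: (firstR t P r m) => [b'|].
  case=> Eb; rewrite Eb in E; have [m'' [h1 h2]] := IH E; exists m''; split => //; exact: leqW.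
by move=> h; exists m.+1; rewrite /= E.
Qed.

Lemma hereR_C n t (P : protocol n) r m b :
  hereR t P r m = Some b -> (if b then C1 t P r m else C0 t P r m).
Proof.
rewrite /hereR; case: decP => h0; first by case=> <-.
by case: decP => h1 // [<-].
Qed.

Lemma firstR_some n t (P : protocol n) r m :
  (C0 t P r m \/ C1 t P r m) -> firstR t P r m <> None.
Proof.
have hh : (C0 t P r m \/ C1 t P r m) -> hereR t P r m <> None.
  rewrite /hereR; case: decP => h0 //; case: decP => h1 //; tauto.
case: m hh => [|m] hh /= H; first exact: hh.
by case: (firstR t P r m) => // /(hh H).
Qed.

Lemma prevQ_lst n t (P : protocol n) (j : 'I_n) r m :
  prevQ t P j (lst r j m) = false <-> forall m', m' < m -> Q t P j (lst r j m') = None.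
Proof.
elim: m => [|m IH] /=; first by split => // _ m'.
case: IH => I1 I2.
split.
  move/norP => [h1 h2] m'; rewrite ltnS leq_eqVlt => /orP [/eqP -> | hm].
    by move: h1; case: (Q t P j (lst r j m)).
  by apply: I1 => //; apply/negbTE.
move=> h; apply/norP; split.
  by rewrite h.
by rewrite I2 // => m' hm; apply: h; apply: ltnW.
Qed.

Lemma Q_None n t (P : protocol n) j s : Q t P j s = None -> P j s = None.
Proof. by rewrite /Q; case: firstK. Qed.

Lemma P'_dec n t (P : protocol n) j r k v :
  decides_in (P' t P) r j v k <->
  0 < k /\ (forall m', m' < k.-1 -> Q t P j (lst r j m') = None) /\
  Q t P j (lst r j k.-1) = Some v.
Proof.
rewrite /decides_in /P'; split.
  move=> [hk]; case E: prevQ => // h; split => //; split => //.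
  by apply/prevQ_lst.
move=> [hk [h1 h2]]; split => //.
by have /prevQ_lst -> := h1.
Qed.

Lemma first_dec n t (P : protocol n) j r M :
  Q t P j (lst r j M) <> None ->
  exists m0 v, m0 <= M /\ decides_in (P' t P) r j v m0.+1.
Proof.
move=> HM.
have ex : exists m, isSome (Q t P j (lst r j m)).
  by exists M; move: HM; case: Q.
case: (ex_minnP ex) => m0 h0 hmin.
move: h0; case E: (Q t P j (lst r j m0)) => [v|] // _.
exists m0, v; split.
  by apply: hmin; move: HM; case: Q.
apply/P'_dec; split => //; split => // m' hm'.
case E': (Q t P j (lst r j m')) => [w|] //.
have := hmin m'; rewrite E' => /(_ isT); by rewrite leqNgt hm'.
Qed.

Lemma Q_cases n t (P : protocol n) j r m v :
  isrun t r -> j \in Nf r -> Q t P j (lst r j m) = Some v ->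
  (firstR t P r m = Some v) \/ (firstR t P r m = None /\ P j (lst r j m) = Some v).
Proof.
move=> Hr Hj; rewrite /Q (firstK_eq P m Hr Hj).
case: (firstR t P r m) => [b [<-]|]; [by left | by right].
Qed.

Lemma agreeKP n t (P : protocol n) r j m1 m2 b w :
  isrun t r -> j \in Nf r ->
  firstR t P r m1 = Some b -> firstR t P r m2 = None ->
  P j (lst r j m2) = Some w -> w = b.
Proof.
move=> Hr Hj h1 h2 hw.
have [m'' [hle [hh hf]]] := firstR_src h1.
have lt2 : m2 < m''.
  rewrite ltnNge; apply/negP => hle2.
  by rewrite (firstR_mono hf hle2) in h2.
have hd : forall x, decided_by P r j x m'' -> False -> False by [].
have dec_w : decided_by P r j w m'' by exists m2.+1.
have := hereR_C hh; case: b {h1 hh hf} => hC.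
  have [hnd _] := CN_refl Hr Hj hC.
  by clear hw; case: w dec_w => // /(hnd j Hj).
have [hnd _] := CN_refl Hr Hj hC.
by clear hw; case: w dec_w => // /(hnd j Hj).
Qed.

Lemma P'_EBA n t (P : protocol n) : EBA t P -> EBA t (P' t P).
Proof.
move=> HE r Hr; have [HU HA HV HT] := HE r Hr; split.
- move=> i v k k' hkk /P'_dec [hk [_ h1]] /P'_dec [hk' [h2 _]].
  have : k.-1 < k'.-1 by rewrite -ltnS prednK // (ltn_predK hkk).
  by move/h2; rewrite h1.
- move=> i j v w k k' Hi Hj /P'_dec [hk [_ h1]] /P'_dec [hk' [_ h2]].
  case: (Q_cases Hr Hi h1) => [f1 | [f1 p1]];
  case: (Q_cases Hr Hj h2) => [f2 | [f2 p2]].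
  + case: (leqP k.-1 k'.-1) => hl.
      by rewrite (firstR_mono f1 hl) in f2; case: f2.
    by rewrite (firstR_mono f2 (ltnW hl)) in f1; case: f1.
  + by rewrite (agreeKP Hr Hj f1 f2 p2).
  + by rewrite (agreeKP Hr Hi f2 f1 p1).
  + apply: (HA i j v w k k') => //; split => //; by rewrite (prednK hk) in p1 p2 *.
- move=> i v k Hi /P'_dec [hk [_ h1]].
  case: (Q_cases Hr Hi h1) => [f1 | [f1 p1]].
    have [m'' [_ [hh _]]] := firstR_src f1.
    have := hereR_C hh; case: v {f1 h1 hh} => hC.
      by have [_ []] := CN_refl Hr Hi hC; eauto.
    by have [_ []] := CN_refl Hr Hi hC; eauto.
  by apply: (HV i v k.-1.+1) => //; split.
- move=> i Hi; have [v [k [hk hP]]] := HT i Hi.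
  have hQ : Q t P i (lst r i k.-1) <> None.
    by rewrite /Q; case: firstK => //; rewrite hP.
  have [m0 [v0 [_ hd]]] := first_dec hQ.
  by exists v0, m0.+1.
Qed.

Lemma P'_dom n t (P : protocol n) : dominates t (P' t P) P.
Proof.
move=> r Hr i Hi m v hP m' hm.
have : decides_in (P' t P) r i v m.+1 by split.
move/P'_dec => [_ [h _]]; exact: Q_None (h m' hm).
Qed.

Theorem mainTheorem7 (n t : nat) (P : protocol n) :
  t < n -> optimal t P ->
  forall (i : 'I_n) (r : run n) (m : nat), isrun t r ->
  ((undecided P r i m /\
    Knows t i (CN_tfaulty t (fun r' m' => no_decided P true r' m' /\
                                          exists_init false r' m')) r m)
   \/
   (undecided P r i m /\
    Knows t i (CN_tfaulty t (fun r' m' => no_decided P false r' m' /\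
                                          exists_init true r' m')) r m)) ->
  forall j, j \in Nf r -> undecided P r j m ->
  exists v, decides_in P r j v m.+1.
Proof.
move=> _ [HE Hopt] i r m Hr Hyp j Hj Hund.
have Cm : C0 t P r m \/ C1 t P r m.
  by case: Hyp => [[_ h]|[_ h]]; [left|right]; apply: h.
case: (classic (exists v, decides_in P r j v m.+1)) => // Hno.
exfalso; apply: (Hopt (P' t P) (P'_EBA HE)); split; first exact: P'_dom.
move=> HD.
have [HU HA HV HT] := HE r Hr.
have [v [k [hk hP]]] := HT j Hj.
have hkm : m < k.-1.
  rewrite ltn_neqAle; apply/andP; split.
    apply/eqP => E; apply: Hno; exists v; split => //; by rewrite E.
  rewrite -ltnS prednK //; rewrite ltnNge; apply/negP => hle.
  by apply: (Hund v); exists k.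
have hQ : Q t P j (lst r j m) <> None.
  rewrite /Q (firstK_eq P m Hr Hj).
  by case E: (firstR t P r m) => //; have := firstR_some Cm.
have [m0 [v0 [hm0 [_ hd]]]] := first_dec hQ.
have := HD r Hr j Hj k.-1 v hP m0 (leq_ltn_trans hm0 hkm).
by rewrite hd.
Qed.
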